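(* Let $U$ be a non-empty set and $B\subseteq U^3$ a ternary relation satisfying (BT2): for all $a,b,c\in U$, $B(a,b,c)\Rightarrow B(a,a,b)$. Then $B$ satisfies (BT3): for all $a,b,c\in U$, $B(a,b,c)\wedge B(a,c,b)\Rightarrow b=c$, if and only if $B$ satisfies both (BTW): for all $a,b\in U$, $B(a,b,a)\Rightarrow a=b$, and (C): for all $a,b,c\in U$, if $a,b,c$ are pairwise distinct then $\langle a,b,c\rangle\notin B$ or $\langle a,c,b\rangle\notin B$. *)

(* Defs.v *)
Definition BT2 {U : Type} (B : U -> U -> U -> Prop) : Prop :=
  forall a b c : U, B a b c -> B a a b.
Definition BT3 {U : Type} (B : U -> U -> U -> Prop) : Prop :=
  forall a b c : U, B a b c /\ B a c b -> b = c.
Definition BTW {U : Type} (B : U -> U -> U -> Prop) : Prop :=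
  forall a b : U, B a b a -> a = b.
Definition condC {U : Type} (B : U -> U -> U -> Prop) : Prop :=
  forall a b c : U, a <> b -> b <> c -> a <> c -> ~ B a b c \/ ~ B a c b.

(* Main.v *)
Require Import Defs.
From Stdlib Require Import Classical.

Theorem proposition9 (U : Type) (B : U -> U -> U -> Prop) (Hne : inhabited U)
  (H2 : BT2 B) : BT3 B <-> (BTW B /\ condC B).
Proof.
  unfold BT3, BTW, condC, BT2 in *; split.
  - intros H3; split.
    + intros a b Hb. symmetry. apply (H3 a b a). split; [exact Hb | exact (H2 _ _ _ Hb)].
    + intros a b c Hab Hbc Hac.
      destruct (classic (B a b c)) as [h1|h1]; [|left; exact h1].
      destruct (classic (B a c b)) as [h2|h2]; [|right; exact h2].
      exfalso; apply Hbc; apply (H3 a b c); split; assumption.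
  - intros [HW HC] a b c [h1 h2].
    destruct (classic (b = c)) as [e|ne]; [exact e|].
    destruct (classic (a = b)) as [eab|nab].
    + subst b. exfalso. apply ne. apply HW. exact h2.
    + destruct (classic (a = c)) as [eac|nac].
      * subst c. exfalso. apply nab. apply HW. exact h1.
      * destruct (HC a b c nab ne nac) as [x|x]; contradiction.
Qed.
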